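(* Let $\mathcal{X}\subseteq\mathbb{R}^2$ be compact. Then $\mathcal{X}$ is standard comonotone if and only if, for all $v\in\{e,-e\}$ and all $\pi\in\Pi_2=\{(1,2),(2,1)\}$, the problem $\max\{v^\top x: x\in\mathcal{X}\}$ admits an optimal solution $\bar x\in\mathcal{Z}(\pi)$.
   Context: $e=(1,1)^\top$. $\Pi_n$ is the set of permutations of $[n]$; for $\pi\in\Pi_n$, $\mathcal{Z}(\pi)=\{x\in\mathbb{R}^n: x_{\pi(1)}\ge\cdots\ge x_{\pi(n)}\}$. A set $\mathcal{X}\subseteq\mathbb{R}^n$ is standard comonotone if for every $\pi\in\Pi_n$ and every $v\in\mathcal{Z}(\pi)$, whenever $\max_{x\in\mathcal{X}}v^\top x$ attains its optimum, it has an optimal solution in $\mathcal{Z}(\pi)$. *)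

(* Defs.v *)
From HB Require Import structures.
From mathcomp Require Import all_boot all_order all_algebra all_fingroup.
From mathcomp Require Import all_classical all_reals all_analysis.
Set Implicit Arguments. Unset Strict Implicit. Unset Printing Implicit Defensive.
Import Order.TTheory GRing.Theory Num.Theory.
Import numFieldNormedType.Exports.
Local Open Scope classical_set_scope.
Local Open Scope ring_scope.

Definition dotv (R : realType) (n : nat) (v x : 'rV[R]_n) : R :=
  \sum_(i < n) v ord0 i * x ord0 i.

Definition Zcone (R : realType) (n : nat) (pi : 'S_n) : set 'rV[R]_n :=
  [set x | forall i j : 'I_n, (i <= j)%N -> x ord0 (pi j) <= x ord0 (pi i)].

Definition optimal_sol (R : realType) (n : nat) (X : set 'rV[R]_n) (v xbar : 'rV[R]_n) : Prop :=
  X xbar /\ forall x, X x -> dotv v x <= dotv v xbar.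

Definition attains_max (R : realType) (n : nat) (X : set 'rV[R]_n) (v : 'rV[R]_n) : Prop :=
  exists xbar, optimal_sol X v xbar.

Definition standard_comonotone (R : realType) (n : nat) (X : set 'rV[R]_n) : Prop :=
  forall (pi : 'S_n) (v : 'rV[R]_n), Zcone pi v ->
    attains_max X v -> exists xbar, optimal_sol X v xbar /\ Zcone pi xbar.

Definition evec (R : realType) (n : nat) : 'rV[R]_n := const_mx 1.

(* Main.v *)
Require Import Defs.
From HB Require Import structures.
From mathcomp Require Import all_boot all_order all_algebra all_fingroup.
From mathcomp Require Import all_classical all_reals all_analysis.
From mathcomp Require Import lra.
Import Order.TTheory GRing.Theory Num.Theory.
Import numFieldNormedType.Exports.
Local Open Scope classical_set_scope.
Local Open Scope ring_scope.

Lemma ord2_cases (i : 'I_2) : i = ord0 \/ i = ord_max.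
Proof.
case: i => [[|[|m]] Hm]; [left|right|by []]; exact: val_inj.
Qed.

Lemma dotE (R : realType) (v x : 'rV[R]_2) :
  dotv v x = v ord0 ord0 * x ord0 ord0 + v ord0 ord_max * x ord0 ord_max.
Proof.
rewrite /dotv big_ord_recr /= big_ord_recr big_ord0 /= add0r.
by have -> : (widen_ord (leqnSn 1) ord_max) = ord0 :> 'I_2 by exact: val_inj.
Qed.

Lemma perm2 (pi : 'S_2) :
  (pi ord0 = ord0 /\ pi ord_max = ord_max) \/
  (pi ord0 = ord_max /\ pi ord_max = ord0).
Proof.
have hne : pi ord0 != pi ord_max by rewrite (inj_eq perm_inj).
case: (ord2_cases (pi ord0)) => h0; case: (ord2_cases (pi ord_max)) => h1;
  rewrite h0 h1 in hne *; by [left | right | rewrite eqxx in hne].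
Qed.

Lemma zcone2 (R : realType) (pi : 'S_2) (x : 'rV[R]_2) :
  Zcone pi x <-> x ord0 (pi ord_max) <= x ord0 (pi ord0).
Proof.
split; first by move=> H; apply: H.
move=> H i j; case: (ord2_cases i) => ->; case: (ord2_cases j) => -> //.
Qed.

Lemma evecE (R : realType) i : evec R 2 ord0 i = 1.
Proof. by rewrite mxE. Qed.

Lemma nevecE (R : realType) i : (- evec R 2) ord0 i = -1.
Proof. by rewrite !mxE. Qed.

Lemma core1 (R : realType) (pa pb qa qb va vb : R) :
  vb <= va -> pa < pb -> qb <= qa -> pa + pb <= qa + qb -> 0 <= va + vb ->
  va * pa + vb * pb <= va * qa + vb * qb.
Proof.
move=> h1 h2 h3 h4 h5.
have h9 : 0 <= (qa + qb) - (pa + pb) by lra.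
have := mulr_ge0 h5 h9.
have h6 : 0 <= va - vb by lra.
have h7 : 0 <= (qa - qb) - (pa - pb) by lra.
have := mulr_ge0 h6 h7.
lra.
Qed.

Lemma core2 (R : realType) (pa pb qa qb va vb : R) :
  vb <= va -> pa < pb -> qb <= qa -> qa + qb <= pa + pb -> va + vb < 0 ->
  va * pa + vb * pb <= va * qa + vb * qb.
Proof.
move=> h1 h2 h3 h4 h5.
have h8 : 0 <= - (va + vb) by lra.
have h9 : 0 <= (pa + pb) - (qa + qb) by lra.
have := mulr_ge0 h8 h9.
have h6 : 0 <= va - vb by lra.
have h7 : 0 <= (qa - qb) - (pa - pb) by lra.
have := mulr_ge0 h6 h7.
lra.
Qed.

Theorem proposition1 (R : realType) (X : set 'rV[R]_2) :
  compact X -> X !=set0 ->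
  (standard_comonotone X <->
   forall (v : 'rV[R]_2), (v = evec R 2 \/ v = - evec R 2) ->
   forall pi : 'S_2, exists xbar, optimal_sol X v xbar /\ Zcone pi xbar).
Proof.
move=> cX X0; split.
- move=> H v hv pi; apply: H.
    apply/zcone2; case: hv => ->; by rewrite ?evecE ?nevecE.
  have cf : {within X, continuous (dotv v)}.
    apply: continuous_subspaceT => x.
    have -> : dotv v = (fun x : 'rV[R]_2 => v ord0 ord0 * x ord0 ord0
                         + v ord0 ord_max * x ord0 ord_max).
      by apply: funext => y; rewrite dotE.
    have h1 : forall (a : R) (i : 'I_2), continuous (fun y : 'rV[R]_2 => a * y ord0 i).
      move=> a i y; apply: (@continuousM _ _ (fun=> a) (fun y : 'rV[R]_2 => y ord0 i)).
        exact: cst_continuous.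
      exact: coord_continuous.
    exact: (@continuousD _ _ _ (fun y : 'rV[R]_2 => v ord0 ord0 * y ord0 ord0)
                   (fun y : 'rV[R]_2 => v ord0 ord_max * y ord0 ord_max) x (h1 _ _ x) (h1 _ _ x)).
  have [c cX' Hc] := EVT_max_rV X0 cX cf.
  exists c; split; first by rewrite inE in cX'.
  by move=> x Xx; apply: Hc; rewrite inE.
- move=> H pi v Hv [p [Xp Hp]].
  have [q [[Xq Hq] Zq]] := H (evec R 2) (or_introl erefl) pi.
  have [r [[Xr Hr] Zr]] := H (- evec R 2) (or_intror erefl) pi.
  case: (pselect (Zcone pi p)) => Zp; first by exists p.
  have Hqp := Hq p Xp; have Hrp := Hr p Xp.
  move: Hqp Hrp; rewrite !dotE !evecE !nevecE => Hqp Hrp.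
  have hp : forall x, X x -> dotv v x <= dotv v p by [].
  have [hq|hr] := lerP 0 (v ord0 ord0 + v ord0 ord_max).
  + exists q; split => //; split => // x Xx; apply: le_trans (Hp x Xx) _.
    move: Zp Hv Zq; rewrite !zcone2 !dotE.
    case: (perm2 pi) => [[-> ->]|[-> ->]] Zp Hv Zq; move/negP: Zp;
      rewrite -ltNge => Zp.
    * by apply: core1 => //; lra.
    * by have := @core1 R _ _ _ _ _ _ Hv Zp Zq ltac:(lra) ltac:(lra); lra.
  + exists r; split => //; split => // x Xx; apply: le_trans (Hp x Xx) _.
    move: Zp Hv Zr; rewrite !zcone2 !dotE.
    case: (perm2 pi) => [[-> ->]|[-> ->]] Zp Hv Zr; move/negP: Zp;
      rewrite -ltNge => Zp.
    * by apply: core2 => //; lra.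
    * by have := @core2 R _ _ _ _ _ _ Hv Zp Zr ltac:(lra) ltac:(lra); lra.
Qed.
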